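(* Define $U:[0,\infty)\to\mathbb{R}$ by $U(r)=\lim_{n\to\infty}u_n(r)$ where $u_0(r)=r$, $u_1(r)=\sqrt{1+r^2}$, $u_2(r)=\sqrt{1+\sqrt{1+r^4}}$, and in general $u_n(r)=\sqrt{1+\sqrt{1+\dots+\sqrt{1+r^{2^n}}}}$ ($n$ nested roots). For real numbers $s>r\ge1$, $U(s)>U(r)$.
   Context: The limit defining $U(r)$ exists for every $r\ge0$ (this is the transfinite radical $\kappa_i([i<\omega]+r[i=\omega])$). *)

(* Defs.v *)
From Stdlib Require Import Reals.
From Coquelicot Require Import Coquelicot.
Open Scope R_scope.

Definition u (n : nat) (r : R) : R :=
  Nat.iter n (fun y => sqrt (1 + y)) (r ^ (2 ^ n)).

(* U(r) = lim_{n -> oo} u_n(r) (the limit exists for r >= 0). *)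
Definition U (r : R) : R := real (Lim_seq (fun n => u n r)).

(* Main.v *)
Require Import Defs.
From Stdlib Require Import Reals Lra Lia.
From Coquelicot Require Import Coquelicot.
Open Scope R_scope.

Definition ff (y : R) : R := sqrt (1 + y).
Definition F (n : nat) (x : R) : R := Nat.iter n ff x.

Lemma u_split (n m : nat) (y : R) : u (n + m) y = F n (u m (y ^ (2 ^ n))).
Proof.
  unfold u, F, ff. rewrite Nat.iter_add. f_equal. f_equal.
  rewrite Nat.pow_add_r, pow_mult. reflexivity.
Qed.

Lemma u_S (k : nat) (y : R) : u (S k) y = sqrt (1 + u k (y ^ 2)).
Proof. exact (u_split 1 k y). Qed.

Lemma u_step (k : nat) : forall y, u k y <= u (S k) y.
Proof.
  induction k as [|k IH]; intro y.
  - rewrite u_S. unfold u; simpl.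
    destruct (Rle_dec 0 y) as [H|H].
    + replace (y * 1) with y by ring.
      rewrite <- (sqrt_pow2 y H) at 1. apply sqrt_le_1_alt. simpl. lra.
    + match goal with |- _ <= sqrt ?a => assert (0 <= sqrt a) by apply sqrt_pos end. lra.
  - rewrite (u_S (S k)), (u_S k). apply sqrt_le_1_alt.
    specialize (IH (y ^ 2)). lra.
Qed.

Lemma u_mono (n k : nat) (y : R) : u k y <= u (n + k) y.
Proof.
  induction n as [|n IH]; simpl. lra.
  eapply Rle_trans. apply IH. apply u_step.
Qed.

Lemma u_ge (k : nat) (y : R) : y <= u k y.
Proof. pose proof (u_mono k 0 y). rewrite Nat.add_0_r in H. unfold u in H at 1. simpl in H. lra. Qed.

Lemma u_le (k : nat) : forall y, 1 <= y -> u k y <= y + 1.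
Proof.
  induction k as [|k IH]; intros y Hy.
  - unfold u; simpl. lra.
  - rewrite u_S. assert (Hy2 : 1 <= y ^ 2) by nra.
    specialize (IH _ Hy2).
    rewrite <- (sqrt_pow2 (y + 1)) by lra. apply sqrt_le_1_alt. nra.
Qed.

Lemma lim_u (y : R) : 1 <= y -> is_lim_seq (fun n => u n y) (U y).
Proof.
  intro Hy.
  destruct (ex_finite_lim_seq_incr (fun n => u n y) (y + 1)) as [l Hl].
  - intro; apply u_step.
  - intro; apply u_le; auto.
  - unfold U. rewrite (is_lim_seq_unique _ _ Hl). exact Hl.
Qed.

Lemma ff_pos (n : nat) (x : R) : 0 <= x -> 0 <= F n x.
Proof. destruct n; simpl; auto. intros; apply sqrt_pos. Qed.

Lemma F_le (n : nat) : forall x y, 0 <= x -> x <= y -> F n x <= F n y.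
Proof.
  induction n as [|n IH]; intros x y Hx Hxy; simpl. auto.
  unfold ff. apply sqrt_le_1_alt. pose proof (IH x y Hx Hxy). fold (F n x) (F n y). lra.
Qed.

Lemma F_lt (n : nat) : forall x y, 0 <= x -> x < y -> F n x < F n y.
Proof.
  induction n as [|n IH]; intros x y Hx Hxy; simpl. auto.
  unfold ff. apply sqrt_lt_1_alt. pose proof (IH x y Hx Hxy).
  pose proof (ff_pos n x Hx). fold (F n x) (F n y). lra.
Qed.

Lemma pow_gap (r s : R) (hr : 1 <= r) (hrs : r < s) (n : nat) :
  1 <= r ^ (2 ^ n) /\ INR (2 ^ n) * (s - r) <= s ^ (2 ^ n) - r ^ (2 ^ n).
Proof.
  induction n as [|n [IH1 IH2]].
  - simpl. lra.
  - assert (E : forall x : R, x ^ (2 ^ S n) = (x ^ (2 ^ n)) ^ 2).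
    { intro x. rewrite <- pow_mult. f_equal. simpl. lia. }
    rewrite !E. replace (2 ^ S n)%nat with (2 * 2 ^ n)%nat by (simpl; lia).
    rewrite mult_INR. simpl (INR 2).
    set (a := r ^ (2 ^ n)) in *. set (b := s ^ (2 ^ n)) in *.
    replace (a ^ 2) with (a * a) by ring. replace (b ^ 2) with (b * b) by ring.
    assert (0 <= INR (2 ^ n)) by apply pos_INR.
    split. nra.
    assert (0 <= INR (2 ^ n) * (s - r)) by (apply Rmult_le_pos; lra).
    assert (1 <= b) by nra.
    assert ((b - a) * 2 <= (b - a) * (b + a)) by (apply Rmult_le_compat_l; lra).
    nra.
Qed.

Theorem lemma9 (r s : R) (hr : 1 <= r) (hrs : r < s) : U r < U s.
Proof.
  destruct (INR_unbounded (1 / (s - r))) as [n Hn].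
  assert (Hn2 : (n < 2 ^ n)%nat) by (apply Nat.pow_gt_lin_r; lia).
  apply lt_INR in Hn2.
  destruct (pow_gap r s hr hrs n) as [H1 H2].
  assert (Hgap : r ^ (2 ^ n) + 1 < s ^ (2 ^ n)).
  { assert (1 < INR (2 ^ n) * (s - r)).
    { assert (1 / (s - r) * (s - r) = 1) by (field; lra).
      assert (1 / (s - r) < INR (2 ^ n)) by lra. nra. }
    lra. }
  set (X := F n (r ^ (2 ^ n) + 1)).
  assert (HU1 : U r <= X).
  { assert (Hle := is_lim_seq_le (fun k => u k r) (fun _ => X) (U r) X).
    simpl in Hle. apply Hle.
    - intro k. eapply Rle_trans. apply (u_mono n k r).
      rewrite u_split. apply F_le.
      + pose proof (u_ge k (r ^ (2 ^ n))). lra.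
      + apply u_le. lra.
    - apply lim_u; auto.
    - apply is_lim_seq_const. }
  assert (HU2 : u n s <= U s).
  { assert (Hle := is_lim_seq_le (fun _ => u n s) (fun k => u (k + n) s) (u n s) (U s)).
    simpl in Hle. apply Hle.
    - intro k. apply u_mono.
    - apply is_lim_seq_const.
    - apply (is_lim_seq_incr_n (fun k => u k s)). apply lim_u; lra. }
  assert (HX : X < u n s).
  { unfold X, u. fold (F n (s ^ (2 ^ n))). 
    change (Nat.iter n (fun y : R => sqrt (1 + y)) (s ^ 2 ^ n)) with (F n (s ^ 2 ^ n)).
    apply F_lt; lra. }
  lra.
Qed.
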